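(* Under the hypotheses of the previous theorem (model $\mathfrak{M}$, variable $x$, Boolean expression $f$, formulas $\theta,\varphi_1,\dots,\varphi_n$ with each $\varphi_i$ non-dependent of $x$ in $\mathfrak{M}$ provided $\theta$, variables $z_1,\dots,z_m$ distinct from $x$ and not free in $\theta$, quantifiers $Q_1,\dots,Q_m\in\{\forall,\exists\}$), if $\mathfrak{M}\models\exists x\theta$ then $$[\![Q_mz_m\dots Q_1z_1\,f\big(\exists x(\theta\land\varphi_1),\dots,\exists x(\theta\land\varphi_n)\big)]\!]^{\mathfrak{M}}=[\![\exists x\big(\theta\land Q_mz_m\dots Q_1z_1\,f(\varphi_1,\dots,\varphi_n)\big)]\!]^{\mathfrak{M}},$$ and moreover in this equation any of the occurrences of $\exists x(\theta\land\cdot)$ may be replaced by $\forall x(\theta\to\cdot)$ without changing the meanings.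
   Context: Work in first-order logic with equality over a relational signature, with countably many variables $v_1,v_2,\dots$. A model $\mathfrak{M}$ has nonempty universe $M$; assignments are $\bar a\in M^\omega$ ($a_i$ is the value of $v_i$); for $x=v_i$, $b\in M$, $\bar a^x_b$ is $\bar a$ with $i$-th entry replaced by $b$. $[\![\varphi]\!]^{\mathfrak{M}}=\{\bar a\in M^\omega:\mathfrak{M}\models\varphi[\bar a]\}$; $\mathfrak{M}\models\chi$ means every $\bar a$ satisfies $\chi$. A Boolean expression is built from its arguments using $\neg$ and $\land$. Definition: $\varphi$ is non-dependent of $x$ in $\mathfrak{M}$ provided $\theta$ iff for all $\bar a\in M^\omega$, $b\in M$: if $\mathfrak{M}\models\theta[\bar a]$ and $\mathfrak{M}\models\theta[\bar a^x_b]$ then ($\mathfrak{M}\models\varphi[\bar a]\iff\mathfrak{M}\models\varphi[\bar a^x_b]$). *)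

(* Defs.v *)
From mathcomp Require Import all_boot.
Set Implicit Arguments. Unset Strict Implicit. Unset Printing Implicit Defensive.

Record signature := Signature { rsym : Type; arity : rsym -> nat }.

(* Variables v_1, v_2, ... are represented by natural numbers (v_{i+1} ~ i). *)
Definition var := nat.

Inductive formula (S : signature) : Type :=
| FRel (r : rsym S) (args : 'I_(arity r) -> var)
| FEq (x y : var)
| FNeg (p : formula S)
| FAnd (p q : formula S)
| FImp (p q : formula S)
| FEx (x : var) (p : formula S)
| FAll (x : var) (p : formula S).

Record model (S : signature) := Model {
  univ : Type;
  univ_elt : univ;
  interp : forall r : rsym S, ('I_(arity r) -> univ) -> Prop }.

Definition assignment S (M : model S) := var -> univ M.

Definition upd S (M : model S) (a : assignment M) (x : var) (b : univ M)
  : assignment M := fun i => if i == x then b else a i.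

Fixpoint sat (S : signature) (M : model S) (p : formula S) (a : assignment M) {struct p} : Prop :=
  match p with
  | FRel r args => @interp S M r (fun k => a (args k))
  | FEq x y => a x = a y
  | FNeg q => ~ @sat S M q a
  | FAnd q1 q2 => @sat S M q1 a /\ @sat S M q2 a
  | FImp q1 q2 => @sat S M q1 a -> @sat S M q2 a
  | FEx x q => exists b, @sat S M q (upd a x b)
  | FAll x q => forall b, @sat S M q (upd a x b)
  end.

Arguments sat {S} M p a.

Definition valid S (M : model S) (p : formula S) : Prop :=
  forall a : assignment M, sat M p a.

Fixpoint free S (z : var) (p : formula S) : Prop :=
  match p with
  | FRel r args => exists k, args k = z
  | FEq x y => x = z \/ y = z
  | FNeg q => free z q
  | FAnd q1 q2 | FImp q1 q2 => free z q1 \/ free z q2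
  | FEx x q | FAll x q => x <> z /\ free z q
  end.

Definition non_dependent S (M : model S) (phi : formula S) (x : var)
  (theta : formula S) : Prop :=
  forall (a : assignment M) (b : univ M),
    sat M theta a -> sat M theta (upd a x b) ->
    (sat M phi a <-> sat M phi (upd a x b)).

Inductive bexp (n : nat) : Type :=
| BArg (i : 'I_n)
| BNeg (f : bexp n)
| BAnd (f g : bexp n).

Fixpoint bapp S n (f : bexp n) (args : 'I_n -> formula S) : formula S :=
  match f with
  | BArg i => args i
  | BNeg g => FNeg (bapp g args)
  | BAnd g h => FAnd (bapp g args) (bapp h args)
  end.

(* Quantifiers: true = forall, false = exists. *)
Definition quant S (Q : bool) (z : var) (p : formula S) : formula S :=
  if Q then FAll z p else FEx z p.

(* qprefix [:: (Q_1,z_1); ...; (Q_m,z_m)] psi = Q_m z_m ... Q_1 z_1 psi *)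
Fixpoint qprefix S (qs : seq (bool * var)) (p : formula S) : formula S :=
  match qs with
  | [::] => p
  | (Q, z) :: qs' => qprefix qs' (quant Q z p)
  end.

(* relativization: false gives  exists x (theta /\ psi),
                   true  gives  forall x (theta -> psi) *)
Definition relat S (c : bool) (x : var) (theta p : formula S) : formula S :=
  if c then FAll x (FImp theta p) else FEx x (FAnd theta p).

(* Main.v *)
Require Import Defs.
From mathcomp Require Import all_boot.
From Stdlib Require Import FunctionalExtensionality Setoid.

Lemma upd_upd_same S (M : model S) (a : assignment M) x b b' :
  upd (upd a x b) x b' = upd a x b'.
Proof. apply: functional_extensionality => i; rewrite /upd; by case: (i == x). Qed.

Lemma upd_comm S (M : model S) (a : assignment M) x z b e : z <> x ->
  upd (upd a x b) z e = upd (upd a z e) x b.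
Proof.
move=> hzx; apply: functional_extensionality => i; rewrite /upd.
case: (eqVneq i z) => [->|_] //.
case: (eqVneq z x) => [h|_] //; by case: hzx.
Qed.

Lemma coinc S (M : model S) (p : formula S) : forall (a a' : assignment M),
  (forall v, free v p -> a v = a' v) -> (sat M p a <-> sat M p a').
Proof.
elim: p => /=.
- move=> r args a a' h.
  have -> : (fun k => a (args k)) = (fun k => a' (args k)).
    by apply: functional_extensionality => k; apply: h; exists k.
  by [].
- move=> y z a a' h; rewrite (h y (or_introl erefl)) (h z (or_intror erefl)).
  by [].
- move=> q IH a a' h; by rewrite (IH a a' h).
- move=> q IHq r IHr a a' h.
  rewrite (IHq a a') ?(IHr a a') //; by move=> v hv; apply: h; auto.
- move=> q IHq r IHr a a' h.
  rewrite (IHq a a') ?(IHr a a') //; by move=> v hv; apply: h; auto.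
- move=> y q IH a a' h.
  have E : forall b, sat M q (upd a y b) <-> sat M q (upd a' y b).
    move=> b; apply: IH => v hv; rewrite /upd; case: (eqVneq v y) => // /eqP hvy; apply: h; auto.
  split=> [[b hb]|[b hb]]; exists b; by apply/E.
- move=> y q IH a a' h.
  have E : forall b, sat M q (upd a y b) <-> sat M q (upd a' y b).
    move=> b; apply: IH => v hv; rewrite /upd; case: (eqVneq v y) => // /eqP hvy; apply: h; auto.
  split=> hb b; by apply/E.
Qed.

Definition G S (M : model S) x (theta p p' : formula S) :=
  forall (a : assignment M) b, sat M theta (upd a x b) ->
    (sat M p a <-> sat M p' (upd a x b)).
Arguments G {S}.

Lemma G_quant S (M : model S) x (theta p p' : formula S) Q z :
  z <> x -> ~ free z theta -> G M x theta p p' ->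
  G M x theta (quant Q z p) (quant Q z p').
Proof.
move=> hzx hf hG a b ht.
have ht' : forall e, sat M theta (upd (upd a z e) x b).
  move=> e; rewrite -upd_comm //; apply/(@coinc S M theta _ (upd a x b)) => // v hv.
  rewrite /upd; case: (eqVneq v z) => [hv'|//]; by subst v.
case: Q => /=; split.
- move=> h e; rewrite upd_comm //; by apply/(hG _ _ (ht' e)).
- move=> h e; apply/(hG _ _ (ht' e)); rewrite -upd_comm //.
- move=> [e h]; exists e; rewrite upd_comm //; by apply/(hG _ _ (ht' e)).
- move=> [e h]; exists e; apply/(hG _ _ (ht' e)); rewrite -upd_comm //.
Qed.

Lemma G_qprefix S (M : model S) x theta (qs : seq (bool * var)) :
  (forall Qz, Qz \in qs -> Qz.2 <> x /\ ~ free Qz.2 theta) ->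
  forall p p', G M x theta p p' -> G M x theta (qprefix qs p) (qprefix qs p').
Proof.
elim: qs => [//|[Q z] qs IH] hq p p' hG /=.
apply: IH.
  by move=> Qz hin; apply: hq; rewrite in_cons hin orbT.
have [h1 h2] := hq (Q, z) (mem_head _ _).
by apply: G_quant.
Qed.

Theorem mainTheorem11 (S : signature) (M : model S) (x : var) (n : nat)
    (f : bexp n) (theta : formula S) (phi : 'I_n -> formula S)
    (qs : seq (bool * var)) :
  (forall i : 'I_n, non_dependent M (phi i) x theta) ->
  (forall Qz, Qz \in qs -> Qz.2 <> x /\ ~ free Qz.2 theta) ->
  valid M (FEx x theta) ->
  forall (c : 'I_n -> bool) (d : bool) (a : assignment M),
    sat M (qprefix qs (bapp f (fun i => relat (c i) x theta (phi i)))) a <->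
    sat M (relat d x theta (qprefix qs (bapp f phi))) a.
Proof.
move=> hnd hq hv c d.
have hbase : G M x theta (bapp f (fun i => relat (c i) x theta (phi i))) (bapp f phi).
  elim: f => [i|g IH|g IHg h IHh] a b ht /=.
  - have key : forall b', sat M theta (upd a x b') ->
        (sat M (phi i) (upd a x b) <-> sat M (phi i) (upd a x b')).
      move=> b' ht'; have := hnd i (upd a x b) b' ht.
      rewrite upd_upd_same; by apply.
    rewrite /relat; case: (c i) => /=; split.
    + by move=> H; apply: H.
    + by move=> H b' ht'; apply/(key b' ht').
    + by move=> [b' [ht' H]]; apply/(key b' ht').
    + by move=> H; exists b.
  - by rewrite (IH a b ht).
  - by rewrite (IHg a b ht) (IHh a b ht).
have hG := @G_qprefix S M x theta qs hq _ _ hbase.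
move=> a; have [b0 hb0] := hv a.
rewrite /relat; case: d => /=; split.
- by move=> H b ht; apply/(hG a b ht).
- by move=> H; apply/(hG a b0 hb0); apply: H.
- by move=> H; exists b0; split => //; apply/(hG a b0 hb0).
- by move=> [b [ht H]]; apply/(hG a b ht).
Qed.
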